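(* There is $n_0$ such that the following holds for all $n\ge n_0$. Let $G=(V,E)$ be an $n$-vertex graph with nonnegative interactions $J$, let $\mu$ be the associated zero-field Ising measure, and let $F\subset V$ be a subset of size $\lfloor \sqrt n/\log n\rfloor$ satisfying $\sum_{u,v\in F,u\ne v}\mathrm{Cov}_\mu(\sigma(u),\sigma(v))\le 2/\log n$. Then the chain $(Z_t)$ on $\{-1,1\}^F$ has mixing time from the all-plus configuration $t_{\mathrm{mix}}^+\ge\frac12|F|\log|F|-20|F|$.
   Context: The Ising measure is $\mu(\sigma)=Z^{-1}\exp(\sum_{uv\in E}J_{uv}\sigma(u)\sigma(v))$ on $\{\pm1\}^V$, $J_{uv}\ge0$. The chain $(Z_t)$ on $\{-1,1\}^F$: at each step a vertex $v\in F$ is chosen uniformly at random and $Z(v)$ is resampled from the conditional law of $\sigma(v)$ under $\mu$ given the spins on $F\setminus\{v\}$; its stationary law $\nu_F$ is the marginal of $\mu$ on $F$. $t_{\mathrm{mix}}^+=\min\{t:\|\mathbb P_+(Z_t\in\cdot)-\nu_F\|_{TV}\le1/4\}$, with $\mathbb P_+$ the law of the chain started from all-plus and $\|\cdot\|_{TV}$ total variation distance. *)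

(* Defs.v *)
From HB Require Import structures.
From mathcomp Require Import all_boot all_order all_algebra.
From mathcomp Require Import reals.
From mathcomp Require Import sequences exp.
Set Implicit Arguments. Unset Strict Implicit. Unset Printing Implicit Defensive.
Import Order.TTheory GRing.Theory Num.Theory.
Local Open Scope ring_scope.

Section Ising.
Variable R : realType.
Variable n : nat.

Definition config := {ffun 'I_n -> bool}.
Definition spin (b : bool) : R := if b then 1 else -1.

Variables (adj : rel 'I_n) (J : 'I_n -> 'I_n -> R).

Definition ising_weight (s : config) : R :=
  expR (\sum_(u : 'I_n) \sum_(v : 'I_n | (u < v)%N && adj u v)
          J u v * spin (s u) * spin (s v)).
Definition ising_Z : R := \sum_(s : config) ising_weight s.
Definition ising_mu (s : config) : R := ising_weight s / ising_Z.
Definition ising_E (f : config -> R) : R := \sum_(s : config) ising_mu s * f s.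
Definition ising_cov (u v : 'I_n) : R :=
  ising_E (fun s => spin (s u) * spin (s v))
  - ising_E (fun s => spin (s u)) * ising_E (fun s => spin (s v)).

Variable F : {set 'I_n}.
Definition Fsite := {x : 'I_n | x \in F}.
Definition Fconfig := {ffun Fsite -> bool}.
Definition restrF (s : config) : Fconfig := [ffun x => s (val x)].
Definition nuF (eta : Fconfig) : R := \sum_(s : config | restrF s == eta) ising_mu s.
Definition setF (eta : Fconfig) (v : 'I_n) (b : bool) : Fconfig :=
  [ffun x => if val x == v then b else eta x].
(* heat-bath transition kernel: v uniform in F, Z(v) resampled from the
   conditional law of sigma(v) given the spins on F \ {v} under mu *)
Definition Kmat (eta eta' : Fconfig) : R :=
  (#|F|%:R)^-1 * \sum_(v in F) \sum_(b : bool)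
     (if eta' == setF eta v b then
        nuF (setF eta v b) / (nuF (setF eta v true) + nuF (setF eta v false))
      else 0).
Definition all_plusF : Fconfig := [ffun => true].
Fixpoint lawZ (t : nat) : {ffun Fconfig -> R} :=
  match t with
  | 0%N => [ffun eta => if eta == all_plusF then 1 else 0]
  | t'.+1 => [ffun eta' => \sum_(eta : Fconfig) lawZ t' eta * Kmat eta eta']
  end.
Definition tv_dist (p q : Fconfig -> R) : R :=
  2^-1 * \sum_(eta : Fconfig) `|p eta - q eta|.
(* t is in the set whose minimum is t_mix^+ *)
Definition mixed_by (t : nat) : Prop := tv_dist (lawZ t) nuF <= 4^-1.
End Ising.

(* Main.v *)
Require Import Defs.
From HB Require Import structures.
From mathcomp Require Import all_boot all_order all_algebra.
From mathcomp Require Import reals.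
From mathcomp Require Import sequences exp.
From mathcomp Require Import ring lra.
Import Order.TTheory GRing.Theory Num.Theory.
Local Open Scope ring_scope.

Set Implicit Arguments. Unset Strict Implicit. Unset Printing Implicit Defensive.

Section AD1.
Variable R : realFieldType.
Lemma AD1 (a0 a1 b0 b1 c0 c1 d0 d1 : R) :
  0 <= a0 -> 0 <= a1 -> 0 <= b0 -> 0 <= b1 -> 0 <= c0 -> 0 <= c1 -> 0 <= d0 -> 0 <= d1 ->
  a0 * b0 <= c0 * d0 -> a1 * b1 <= c1 * d1 -> a0 * b1 <= c1 * d0 -> a1 * b0 <= c1 * d0 ->
  (a0 + a1) * (b0 + b1) <= (c0 + c1) * (d0 + d1).
Proof.
move=> ha0 ha1 hb0 hb1 hc0 hc1 hd0 hd1 h00 h11 h01 h10.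
set r := c1 * d0.
have key : a0 * b1 + a1 * b0 <= r + c0 * d1.
  have [r0|rpos] := eqVneq r 0.
    have e1 : a0 * b1 = 0 by apply/eqP; rewrite eq_le mulr_ge0 // andbT -r0.
    have e2 : a1 * b0 = 0 by apply/eqP; rewrite eq_le mulr_ge0 // andbT -r0.
    by rewrite e1 e2 r0 addr0 add0r mulr_ge0.
  have rgt : 0 < r by rewrite lt_def rpos mulr_ge0.
  have hpq : (a0 * b1) * (a1 * b0) <= r * (c0 * d1).
    have -> : (a0 * b1) * (a1 * b0) = (a0 * b0) * (a1 * b1) by ring.
    have -> : r * (c0 * d1) = (c0 * d0) * (c1 * d1) by rewrite /r; ring.
    by apply: ler_pM; rewrite ?mulr_ge0.
  have hprod : 0 <= (r - a0 * b1) * (r - a1 * b0) by rewrite mulr_ge0 // subr_ge0.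
  rewrite -(ler_pM2l rgt).
  nra.
have -> : (a0 + a1) * (b0 + b1) = a0 * b0 + a1 * b1 + (a0 * b1 + a1 * b0) by ring.
have -> : (c0 + c1) * (d0 + d1) = c0 * d0 + c1 * d1 + (r + c0 * d1) by rewrite /r; ring.
by apply: lerD; [apply: lerD|].
Qed.
End AD1.

Section ADgen.
Variable R : realFieldType.
Variable T : finType.
Local Notation bf := {ffun T -> bool}.

Definition bjoin (x y : bf) : bf := [ffun i => x i || y i].
Definition bmeet (x y : bf) : bf := [ffun i => x i && y i].
Definition bagree (S : {set T}) (x y : bf) : bool :=
  [forall j, (j \notin S) ==> (x j == y j)].
Definition bupd (x : bf) (i : T) (b : bool) : bf :=
  [ffun j => if j == i then b else x j].

Lemma bagree_upd (S : {set T}) (i : T) (x x0 : bf) (b : bool) : i \notin S ->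
  bagree S x (bupd x0 i b) = bagree (i |: S) x x0 && (x i == b).
Proof.
move=> iS; apply/idP/idP.
  move/forallP=> H; apply/andP; split.
    apply/forallP=> j; apply/implyP; rewrite in_setU1 negb_or => /andP[jni jS].
    by have := implyP (H j) jS; rewrite ffunE (negbTE jni).
  by have := implyP (H i) iS; rewrite ffunE eqxx.
move=> /andP[/forallP H /eqP xb]; apply/forallP=> j; apply/implyP=> jS.
rewrite ffunE; case: (j =P i) => [->|/eqP ji]; first by rewrite xb.
by apply: (implyP (H j)); rewrite in_setU1 negb_or ji jS.
Qed.

Lemma sum_agree_split (S : {set T}) (i : T) (x0 : bf) (F : bf -> R) : i \notin S ->
  \sum_(x | bagree (i |: S) x x0) F x =
  \sum_(b : bool) \sum_(x | bagree S x (bupd x0 i b)) F x.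
Proof.
move=> iS; rewrite big_bool /= !(big_mkcond (fun x => bagree _ x _)) -big_split /=.
apply: eq_bigr => x _; rewrite !bagree_upd //.
by case: (bagree _ x x0); case: (x i); rewrite /= ?addr0 ?add0r.
Qed.

Lemma sum_agree0 (x0 : bf) (F : bf -> R) : \sum_(x | bagree set0 x x0) F x = F x0.
Proof.
apply: big_pred1 => x /=; apply/forallP/eqP => [H|->]; last by move=> j; rewrite eqxx implybT.
by apply/ffunP => j; apply/eqP; apply: (implyP (H j)); rewrite in_set0.
Qed.

Lemma bjoin_upd (x y : bf) (i : T) (b b' : bool) : bjoin (bupd x i b) (bupd y i b') = bupd (bjoin x y) i (b || b').
Proof. by apply/ffunP=> j; rewrite !ffunE; case: (j == i). Qed.
Lemma bmeet_upd (x y : bf) (i : T) (b b' : bool) : bmeet (bupd x i b) (bupd y i b') = bupd (bmeet x y) i (b && b').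
Proof. by apply/ffunP=> j; rewrite !ffunE; case: (j == i). Qed.

Lemma AD_seq (s : seq T) : forall (a b c d : bf -> R) (x0 y0 : bf),
  (forall x, 0 <= a x) -> (forall x, 0 <= b x) -> (forall x, 0 <= c x) -> (forall x, 0 <= d x) ->
  (forall x y, bagree [set j in s] x x0 -> bagree [set j in s] y y0 ->
     a x * b y <= c (bjoin x y) * d (bmeet x y)) ->
  (\sum_(x | bagree [set j in s] x x0) a x) * (\sum_(y | bagree [set j in s] y y0) b y) <=
  (\sum_(z | bagree [set j in s] z (bjoin x0 y0)) c z) *
  (\sum_(z | bagree [set j in s] z (bmeet x0 y0)) d z).
Proof.
elim: s => [|i s IH] a b c d x0 y0 ha hb hc hd H.
  have e : [set j in [::]] = set0 :> {set T} by apply/setP=> j; rewrite !inE.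
  rewrite e !sum_agree0; apply: H; apply/forallP=> j; by rewrite eqxx implybT.
have [iS|iS] := boolP (i \in s).
  have e : [set j in i :: s] = [set j in s] by apply/setP=> j; rewrite !inE; case: eqP => // ->.
  by rewrite e; apply: IH => //; rewrite -e.
have e : [set j in i :: s] = i |: [set j in s] by apply/setP=> j; rewrite !inE.
have iS' : i \notin [set j in s] by rewrite inE.
rewrite e !sum_agree_split // !big_bool /=.
have IH' : forall bb bb', (\sum_(x | bagree [set j in s] x (bupd x0 i bb)) a x) *
    (\sum_(y | bagree [set j in s] y (bupd y0 i bb')) b y) <=
    (\sum_(z | bagree [set j in s] z (bupd (bjoin x0 y0) i (bb || bb'))) c z) *
    (\sum_(z | bagree [set j in s] z (bupd (bmeet x0 y0) i (bb && bb'))) d z).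
  move=> bb bb'; rewrite -bjoin_upd -bmeet_upd; apply: IH => // x y hx hy.
  apply: H; rewrite e.
    by move: hx; rewrite bagree_upd // => /andP[].
  by move: hy; rewrite bagree_upd // => /andP[].
rewrite [X in X * _ <= _]addrC [X in _ * X <= _]addrC [X in _ <= X * _]addrC [X in _ <= _ * X]addrC.
apply: AD1; rewrite ?sumr_ge0 //;
  first [exact: (IH' false false) | exact: (IH' true true) | exact: (IH' false true) | exact: (IH' true false)].
Qed.

Theorem AD (a b c d : bf -> R) :
  (forall x, 0 <= a x) -> (forall x, 0 <= b x) -> (forall x, 0 <= c x) -> (forall x, 0 <= d x) ->
  (forall x y, a x * b y <= c (bjoin x y) * d (bmeet x y)) ->
  (\sum_x a x) * (\sum_y b y) <= (\sum_z c z) * (\sum_z d z).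
Proof.
move=> ha hb hc hd H.
have hT : forall x y : bf, bagree [set j in enum T] x y.
  by move=> x y; apply/forallP=> j; rewrite inE mem_enum.
have := @AD_seq (enum T) a b c d [ffun=> false] [ffun=> false] ha hb hc hd (fun x y _ _ => H x y).
by rewrite !(eq_bigl _ _ (fun x => hT x _)).
Qed.
End ADgen.

Section Chain.
Variable R : realFieldType.
Variable T : finType.
Local Notation bf := {ffun T -> bool}.
Variable nu : bf -> R.
Hypothesis nu_pos : forall x, 0 < nu x.
Hypothesis nu_lat : forall x y, nu x * nu y <= nu (bjoin x y) * nu (bmeet x y).

Definition ble (x y : bf) := [forall i, x i ==> y i].
Definition incr (g : bf -> R) := forall x y, ble x y -> g x <= g y.

Lemma ble_joinl x y : ble x (bjoin x y).
Proof. by apply/forallP=> i; rewrite ffunE; case: (x i). Qed.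
Lemma ble_joinr x y : ble y (bjoin x y).
Proof. by apply/forallP=> i; rewrite ffunE; case: (y i); rewrite ?orbT. Qed.

Lemma FKG (g h : bf -> R) : (forall x, 0 <= g x) -> (forall x, 0 <= h x) -> incr g -> incr h ->
  (\sum_x nu x * g x) * (\sum_x nu x * h x) <= (\sum_x nu x * (g x * h x)) * (\sum_x nu x).
Proof.
move=> g0 h0 gi hi.
apply: (@AD R T (fun x => nu x * g x) (fun x => nu x * h x) (fun x => nu x * (g x * h x)) nu);
  [move=> x; apply: mulr_ge0; [exact: ltW | exact: g0]
  |move=> x; apply: mulr_ge0; [exact: ltW | exact: h0]
  |move=> x; apply: mulr_ge0; [exact: ltW | exact: mulr_ge0]
  |move=> x; exact: ltW|].
move=> x y.
have -> : nu x * g x * (nu y * h y) = (nu x * nu y) * (g x * h y) by ring.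
have -> : nu (bjoin x y) * (g (bjoin x y) * h (bjoin x y)) * nu (bmeet x y) =
   (nu (bjoin x y) * nu (bmeet x y)) * (g (bjoin x y) * h (bjoin x y)) by ring.
apply: ler_pM; [by apply: mulr_ge0; exact: ltW | by apply: mulr_ge0 | by [] |].
apply: ler_pM => //; [exact: gi (ble_joinl x y) | exact: hi (ble_joinr x y)].
Qed.

Lemma bupd_at (e : bf) i b : bupd e i b i = b.
Proof. by rewrite ffunE eqxx. Qed.
Lemma bupd_bupd (e : bf) i a b : bupd (bupd e i a) i b = bupd e i b.
Proof. by apply/ffunP=> j; rewrite !ffunE; case: (j == i). Qed.
Lemma bupd_id (e : bf) i : bupd e i (e i) = e.
Proof. by apply/ffunP=> j; rewrite !ffunE; case: (j =P i) => [->|]. Qed.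
Lemma bupd_same (e : bf) i b : e i = b -> bupd e i b = e.
Proof. by move=> <-; exact: bupd_id. Qed.

Definition den i (e : bf) := nu (bupd e i true) + nu (bupd e i false).
Lemma den_gt0 i e : 0 < den i e.
Proof. by rewrite /den addr_gt0. Qed.
Lemma den_upd i e b : den i (bupd e i b) = den i e.
Proof. by rewrite /den !bupd_bupd. Qed.

Definition pr i (e : bf) b := nu (bupd e i b) / den i e.
Lemma pr_ge0 i e b : 0 <= pr i e b.
Proof. by rewrite /pr divr_ge0 ?ltW ?den_gt0. Qed.
Lemma pr_sum i e : pr i e true + pr i e false = 1.
Proof. by rewrite /pr -mulrDl divff // gt_eqF // den_gt0. Qed.

Definition Kv i (e e' : bf) : R := \sum_(b : bool) (if e' == bupd e i b then pr i e b else 0).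
Definition push i (p : bf -> R) : bf -> R := fun e' => \sum_e p e * Kv i e e'.
Definition Kg i (g : bf -> R) (e : bf) : R := \sum_(b : bool) pr i e b * g (bupd e i b).

Lemma sum_if_eq (e : bf) (c : R) (g : bf -> R) :
  \sum_e' (if e' == e then c else 0) * g e' = c * g e.
Proof.
rewrite (bigD1 e) //= eqxx big1 ?addr0 // => e' /negbTE ->; exact: mul0r.
Qed.

Lemma pair_push i p g : \sum_e' push i p e' * g e' = \sum_e p e * Kg i g e.
Proof.
rewrite /push; under eq_bigr do rewrite mulr_suml.
rewrite exchange_big /=; apply: eq_bigr => e _.
under eq_bigr do rewrite -mulrA; rewrite -mulr_sumr; congr (_ * _).
rewrite /Kv; under eq_bigr do rewrite mulr_suml.
rewrite exchange_big /=; apply: eq_bigr => b _; exact: sum_if_eq.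
Qed.

Lemma Kg_const i c e : Kg i (fun _ => c) e = c.
Proof. by rewrite /Kg big_bool /= -mulrDl pr_sum mul1r. Qed.

Lemma Kg_mono i g : incr g -> incr (Kg i g).
Proof.
move=> gi e f lef; rewrite /Kg !big_bool /=.
have le1 : forall b, ble (bupd e i b) (bupd f i b).
  move=> b; apply/forallP=> j; rewrite !ffunE; case: (j == i); first by case: b.
  exact: (forallP lef j).
have le2 : forall h : bf, ble (bupd h i false) (bupd h i true).
  by move=> h; apply/forallP=> j; rewrite !ffunE; case: (j == i) => //; case: (h j).
have hjoin : bjoin (bupd e i true) (bupd f i false) = bupd f i true.
  apply/ffunP=> j; rewrite !ffunE; case: (j == i) => //.
  by have := forallP lef j; case: (e j); case: (f j).
have hmeet : bmeet (bupd e i true) (bupd f i false) = bupd e i false.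
  apply/ffunP=> j; rewrite !ffunE; case: (j == i); rewrite ?andbF //.
  by have := forallP lef j; case: (e j); case: (f j).
have lat := nu_lat (bupd e i true) (bupd f i false); rewrite hjoin hmeet in lat.
have ppos := pr_ge0 i e; have qpos := pr_ge0 i f.
have hpq : pr i e true <= pr i f true.
  rewrite /pr ler_pdivrMr ?den_gt0 // mulrAC ler_pdivlMr ?den_gt0 //.
  rewrite /den !mulrDr; apply: lerD => //.
  by rewrite mulrC.
have s1 := pr_sum i e; have s2 := pr_sum i f.
have g1 := gi _ _ (le1 true); have g2 := gi _ _ (le1 false); have g3 := gi _ _ (le2 f).
have pt := ppos true; have pf := ppos false.
nra.
Qed.

Definition dom (p q : bf -> R) := forall g, incr g -> \sum_e q e * g e <= \sum_e p e * g e.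

Lemma push_dom i p q : dom p q -> dom (push i p) (push i q).
Proof. by move=> d g gi; rewrite !pair_push; apply: d; exact: Kg_mono. Qed.

Lemma push_mass i p : \sum_e push i p e = \sum_e p e.
Proof.
transitivity (\sum_e push i p e * 1); first by apply: eq_bigr => e _; rewrite mulr1.
by rewrite (pair_push i p (fun _ => 1)); apply: eq_bigr => e _; rewrite Kg_const mulr1.
Qed.

Definition applys (s : seq T) (p : bf -> R) : bf -> R := foldl (fun q i => push i q) p s.

Lemma applys_dom s : forall p q, dom p q -> dom (applys s p) (applys s q).
Proof. by elim: s => [|i s IH] p q d //=; apply: IH; exact: push_dom. Qed.

Lemma applys_mass s : forall p, \sum_e applys s p e = \sum_e p e.
Proof. by elim: s => [|i s IH] p //=; rewrite IH push_mass. Qed.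

Lemma applys_rcons s i p : applys (rcons s i) p = push i (applys s p).
Proof. by rewrite /applys foldl_rcons. Qed.

Lemma eq_upd_split (e e' : bf) i b :
  (e' == bupd e i b) = (e' i == b) && (e == bupd e' i (e i)).
Proof.
apply/eqP/andP => [->|[/eqP h /eqP h2]]; first by rewrite bupd_at bupd_bupd bupd_id eqxx.
by rewrite h2 bupd_bupd bupd_same.
Qed.

Lemma sum_upd_eq (e' : bf) i b (H : bf -> R) :
  \sum_e (if e' == bupd e i b then H e else 0) =
  if e' i == b then H (bupd e' i true) + H (bupd e' i false) else 0.
Proof.
under eq_bigr do rewrite eq_upd_split.
case: (e' i == b) => /=; last by rewrite big1.
rewrite (bigD1 (bupd e' i true)) //= bupd_at eqxx.
rewrite (bigD1 (bupd e' i false)) /=; last first.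
  by apply/eqP=> /(congr1 (fun f : bf => f i)); rewrite !bupd_at.
rewrite bupd_at eqxx big1 ?addr0 // => e /andP[ht hf].
case: eqP => // he; move: ht hf; rewrite he.
by case: (e i); rewrite eqxx.
Qed.

Variable B : pred bf.
Definition mB (e : bf) : R := nu e * (if B e then 1 else 0).

Lemma push_inv i : (forall e b, B (bupd e i b) = B e) -> forall e', push i mB e' = mB e'.
Proof.
move=> hB e'; rewrite /push.
under eq_bigr do rewrite /Kv mulr_sumr.
rewrite exchange_big /=.
under eq_bigr => b _.
  rewrite (eq_bigr (fun e => if e' == bupd e i b then mB e * pr i e b else 0)); last first.
    by move=> e _; case: ifP; rewrite ?mulr0.
  rewrite sum_upd_eq.
  over.
rewrite big_bool /= /mB !hB /pr !den_upd !bupd_bupd.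
have dpos := den_gt0 i e'.
have key : forall b, nu (bupd e' i true) * (if B e' then 1 else 0) * (nu (bupd e' i b) / den i e') +
   nu (bupd e' i false) * (if B e' then 1 else 0) * (nu (bupd e' i b) / den i e') =
   nu (bupd e' i b) * (if B e' then 1 else 0).
  move=> b; rewrite -mulrDl -mulrDl -/(den i e').
  by field; rewrite gt_eqF.
rewrite !key; case: (boolP (e' i)) => h /=.
  by rewrite addr0 bupd_same.
by rewrite add0r bupd_same // (negbTE h).
Qed.

Lemma applys_inv s : (forall i, i \in s -> forall e b, B (bupd e i b) = B e) ->
  forall e, applys s mB e = mB e.
Proof.
elim/last_ind: s => [|s i IH] hs e //.
rewrite applys_rcons.
have -> : push i (applys s mB) e = push i mB e.
  by apply: eq_bigr => f _; rewrite IH // => j js; apply: hs; rewrite mem_rcons inE js orbT.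
by apply: push_inv; apply: hs; rewrite mem_rcons inE eqxx.
Qed.

Lemma push_scale i c p e : push i (fun f => c * p f) e = c * push i p e.
Proof. by rewrite /push mulr_sumr; apply: eq_bigr => f _; rewrite mulrA. Qed.

Lemma applys_scale s : forall c p e, applys s (fun f => c * p f) e = c * applys s p e.
Proof.
elim/last_ind: s => [|s i IH] c p e //.
rewrite !applys_rcons /push mulr_sumr; apply: eq_bigr => f _; rewrite IH mulrA //.
Qed.

End Chain.

Section Count.
Variable R : realFieldType.
Variable T : finType.

Fixpoint seqs (t : nat) : seq (seq T) :=
  if t is t'.+1 then [seq rcons s x | s <- seqs t', x <- enum T] else [:: [::]].

Lemma sum_seqsS t (G : seq T -> R) :
  \sum_(s <- seqs t.+1) G s = \sum_(s <- seqs t) \sum_x G (rcons s x).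
Proof.
rewrite /= big_allpairs_dep; apply: eq_bigr => s _; exact: big_enum.
Qed.

Lemma sum_pred (P : pred T) : \sum_x (if P x then 1 else 0 : R) = #|P|%:R.
Proof. by rewrite -big_mkcond /= -sum1_card natr_sum. Qed.

Lemma count_seqs t (P : pred T) :
  \sum_(s <- seqs t) (if all P s then 1 else 0 : R) = (#|P|%:R) ^+ t.
Proof.
elim: t => [|t IH]; first by rewrite /= big_seq1 /= expr0.
rewrite sum_seqsS exprSr -IH mulr_suml; apply: eq_bigr => s _.
rewrite -sum_pred mulr_sumr; apply: eq_bigr => x _; rewrite all_rcons.
by case: (P x); case: (all P s); rewrite ?mulr0 ?mulr1 ?mul0r.
Qed.

Lemma size_seqs t : \sum_(s <- seqs t) (1 : R) = (#|T|%:R) ^+ t.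
Proof.
rewrite -(count_seqs t predT); apply: eq_bigr => s _.
by rewrite all_predT.
Qed.

Definition Uset (s : seq T) : {set T} := [set x | x \notin s].

Lemma card_U (s : seq T) : (#|Uset s|%:R : R) = \sum_x (if x \notin s then 1 else 0).
Proof.
rewrite -sum_pred; apply: eq_bigr => x _.
by have := in_set (fun x => x \notin s) x; rewrite /Uset /in_mem /= => ->.
Qed.

Lemma notin_all (x : T) (s : seq T) : (x \notin s) = all (predC1 x) s.
Proof. by rewrite all_predC has_pred1. Qed.

Lemma sum_U t : \sum_(s <- seqs t) (#|Uset s|%:R : R) = #|T|%:R * (#|T|.-1%:R) ^+ t.
Proof.
under eq_bigr do rewrite card_U.
rewrite exchange_big /= -[X in X * _]sum_pred mulr_suml; apply: eq_bigr => x _ /=.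
under eq_bigr do rewrite notin_all.
by rewrite count_seqs cardC1 mul1r.
Qed.

Lemma sum_U2 t : \sum_(s <- seqs t) (#|Uset s|%:R : R) ^+ 2 <=
   #|T|%:R * (#|T|.-1%:R) ^+ t + #|T|%:R * #|T|%:R * ((#|T| - 2)%:R) ^+ t.
Proof.
under eq_bigr do rewrite card_U expr2 mulr_suml.
under eq_bigr do under eq_bigr do rewrite mulr_sumr.
rewrite exchange_big /=.
apply: (le_trans (y := \sum_(x : T) ((#|T|.-1%:R)^+t + #|T|%:R * ((#|T| - 2)%:R)^+t))).
  apply: ler_sum => x _; rewrite exchange_big /= (bigD1 x) //=; apply: lerD.
    set L := (X in X <= _).
    have -> : L = \sum_(i <- seqs t) (if all (predC1 x) i then 1 else 0 : R).
      by apply: eq_bigr => s _; rewrite notin_all; case: all; rewrite ?mulr1 ?mulr0.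
    by rewrite count_seqs cardC1.
  apply: (le_trans (y := \sum_(y | y != x) ((#|T| - 2)%:R)^+t)).
    apply: ler_sum => y yx.
    have -> : \sum_(s <- seqs t) (if x \notin s then 1 else 0) * (if y \notin s then 1 else 0)
       = \sum_(s <- seqs t) (if all [predC pred2 x y] s then 1 else 0 : R).
      apply: eq_bigr => s _; rewrite !notin_all.
      have -> : all [predC pred2 x y] s = all (predC1 x) s && all (predC1 y) s.
        by rewrite -all_predI; apply: eq_all => z /=; rewrite negb_or.
      by case: (all _ s); case: (all _ s); rewrite ?mulr1 ?mulr0.
    rewrite count_seqs.
    have -> : #|[predC pred2 x y]| = (#|T| - 2)%N.
      by have := cardC (pred2 x y); rewrite card2 eq_sym yx => <-; rewrite addKn.
    by [].
  set c := ((#|T| - 2)%:R)^+t.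
  have c0 : 0 <= c by rewrite exprn_ge0 ?ler0n.
  rewrite sumr_const -[c *+ _]mulr_natl; apply: ler_wpM2r => //; rewrite ler_nat; exact: max_card.
rewrite big_split /= !sumr_const -mulrA !mulr_natl.
by [].
Qed.
End Count.

Section Prob.
Variable R : realFieldType.
Variable T : finType.
Local Notation bf := {ffun T -> bool}.
Variable nu : bf -> R.
Hypothesis nu_pos : forall x, 0 < nu x.
Hypothesis nu_lat : forall x y, nu x * nu y <= nu (bjoin x y) * nu (bmeet x y).
Hypothesis nu_sum : \sum_e nu e = 1.
Definition negf (e : bf) : bf := [ffun i => ~~ e i].
Hypothesis nu_neg : forall e, nu (negf e) = nu e.

Definition ind (b : bool) : R := if b then 1 else 0.
Definition sp (b : bool) : R := if b then 1 else -1.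

Lemma ind_ge0 b : 0 <= ind b. Proof. by case: b; rewrite /ind. Qed.
Lemma ind_le1 b : ind b <= 1. Proof. by case: b; rewrite /ind. Qed.

Lemma negfK : involutive negf.
Proof. by move=> e; apply/ffunP=> i; rewrite !ffunE negbK. Qed.

Lemma E_sp0 x : \sum_e nu e * sp (e x) = 0.
Proof.
have h : \sum_e nu e * sp (e x) = - \sum_e nu e * sp (e x).
  rewrite [LHS](reindex_inj (inv_inj negfK)) /= -sumrN; apply: eq_bigr => e _.
  by rewrite nu_neg ffunE /sp; case: (e x); rewrite /= ?mulrN ?mulr1 ?opprK.
move: h; set S := \sum_e _; lra.
Qed.

Lemma ind_incr x : incr (fun e : bf => ind (e x)).
Proof.
move=> e f /forallP /(_ x); rewrite /ind; case: (e x); case: (f x) => //= _.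
Qed.

Lemma E_spsp_ge0 x y : 0 <= \sum_e nu e * (sp (e x) * sp (e y)).
Proof.
have fkg := FKG nu_pos nu_lat (fun e => ind_ge0 (e x)) (fun e => ind_ge0 (e y)) (ind_incr x) (ind_incr y).
rewrite nu_sum mulr1 in fkg.
have hx := E_sp0 x; have hy := E_sp0 y.
have ex : forall z, \sum_e nu e * sp (e z) = 2 * \sum_e nu e * ind (e z) - 1.
  move=> z; transitivity (\sum_e (2 * (nu e * ind (e z)) - nu e)).
    by apply: eq_bigr => e _; rewrite /sp /ind; case: (e z) => /=; ring.
  by rewrite sumrB -mulr_sumr nu_sum.
have exy : \sum_e nu e * (sp (e x) * sp (e y)) =
   4 * \sum_e nu e * (ind (e x) * ind (e y)) - 2 * \sum_e nu e * ind (e x)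
   - 2 * \sum_e nu e * ind (e y) + 1.
  transitivity (\sum_e (4 * (nu e * (ind (e x) * ind (e y))) - 2 * (nu e * ind (e x))
      - 2 * (nu e * ind (e y)) + nu e)).
    by apply: eq_bigr => e _; rewrite /sp /ind; case: (e x); case: (e y) => /=; ring.
  by rewrite big_split /= !sumrB -!mulr_sumr nu_sum.
rewrite ex in hx; rewrite ex in hy; rewrite exy.
nra.
Qed.

Definition fsum (P : pred T) (e : bf) : R := \sum_(x | P x) sp (e x).

Lemma sq_sum (P : pred T) (e : bf) :
  fsum P e ^+ 2 = \sum_(x | P x) \sum_(y | P y) sp (e x) * sp (e y).
Proof. by rewrite /fsum expr2 mulr_suml; apply: eq_bigr => x _; rewrite mulr_sumr. Qed.

Lemma E_fsum2 (P : pred T) :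
  \sum_e nu e * fsum P e ^+ 2 <= \sum_x \sum_y \sum_e nu e * (sp (e x) * sp (e y)).
Proof.
under eq_bigr do rewrite sq_sum mulr_sumr.
rewrite exchange_big /=.
under eq_bigr do under eq_bigr do rewrite mulr_sumr.
under eq_bigr do rewrite exchange_big /=.
rewrite [X in X <= _]big_mkcond /=; apply: ler_sum => x _.
case: (P x); last by rewrite sumr_ge0 // => y _; exact: E_spsp_ge0.
rewrite big_mkcond /=; apply: ler_sum => y _.
case: (P y) => //; exact: E_spsp_ge0.
Qed.

Lemma E_total (c : R) :
  \sum_x \sum_(y | y != x) \sum_e nu e * (sp (e x) * sp (e y)) <= c ->
  \sum_x \sum_y \sum_e nu e * (sp (e x) * sp (e y)) <= #|T|%:R + c.
Proof.
move=> h.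
have -> : \sum_x \sum_y \sum_e nu e * (sp (e x) * sp (e y)) =
    \sum_x (1 + \sum_(y | y != x) \sum_e nu e * (sp (e x) * sp (e y))).
  apply: eq_bigr => x _; rewrite (bigD1 x) //=; congr (_ + _).
  by rewrite -nu_sum; apply: eq_bigr => e _; rewrite /sp; case: (e x); rewrite ?mulr1 ?mulrNN ?mulr1.
by rewrite big_split /= sumr_const lerD.
Qed.


Definition top : bf := [ffun => true].
Definition delta (e : bf) : R := ind (e == top).
Definition Bp (S : {set T}) : pred bf := fun e => [forall x in S, e x].
Definition ftot (e : bf) : R := \sum_x sp (e x).
Definition fW (S : {set T}) (e : bf) : R := \sum_(x | x \notin S) sp (e x).

Lemma ble_top e : ble e top.
Proof. by apply/forallP=> i; rewrite ffunE implybT. Qed.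

Lemma sp_mono (b c : bool) : b ==> c -> sp b <= sp c.
Proof. by case: b; case: c => //= _; rewrite /sp; lra. Qed.

Lemma ftot_incr : incr ftot.
Proof. by move=> e f /forallP h; apply: ler_sum => x _; exact: sp_mono. Qed.
Lemma fW_incr (S : {set T}) : incr (fW S).
Proof. by move=> e f /forallP h; apply: ler_sum => x _; exact: sp_mono. Qed.

Lemma ind_ge_incr (g : bf -> R) a : incr g -> incr (fun e => ind (a <= g e)).
Proof.
move=> gi e f lef; rewrite /ind; case: ifP => h; last by case: ifP.
by rewrite (le_trans h (gi _ _ lef)).
Qed.

Lemma Bp_incr (S : {set T}) : incr (fun e => ind (Bp S e)).
Proof.
move=> e f lef; rewrite /ind; case: ifP => h; last by case: ifP.
suff -> : Bp S f by [].
apply/forallP=> x; apply/implyP=> xS; have := implyP (forallP h x) xS.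
exact: (implyP (forallP lef x)).
Qed.

Lemma Bp_upd (S : {set T}) (e : bf) (x : T) (b : bool) : x \notin S -> Bp S (bupd e x b) = Bp S e.
Proof.
move=> xS; apply/forallP/forallP=> h y; apply/implyP=> yS; have := implyP (h y) yS;
  rewrite ffunE; case: (y =P x) => // yx; by rewrite -yx yS in xS.
Qed.

Lemma Btop (S : {set T}) : Bp S top.
Proof. by apply/forallP=> x; rewrite ffunE implybT. Qed.

Local Notation mBS S := (mB nu (Bp S)).

Lemma mB_ge0 (S : {set T}) (e : bf) : 0 <= mBS S e.
Proof. by apply: mulr_ge0; [exact: ltW | case: ifP]. Qed.

Lemma nuB_gt0 (S : {set T}) : 0 < \sum_e mBS S e.
Proof.
rewrite (bigD1 top) //= /mB Btop mulr1; apply: ltr_wpDr; last exact: nu_pos.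
by rewrite sumr_ge0 // => e _; exact: mB_ge0.
Qed.

Lemma dom_start (S : {set T}) : dom (fun e => (\sum_f mBS S f) * delta e) (mBS S).
Proof.
move=> g gi; apply: (le_trans (y := \sum_e mBS S e * g top)).
  by apply: ler_sum => e _; apply: ler_wpM2l; [exact: mB_ge0 | exact: gi (ble_top e)].
rewrite -mulr_suml; set c := \sum_f mBS S f.
rewrite (bigD1 top) //= /delta /ind eqxx mulr1 big1 ?addr0 //.
by move=> e /negbTE ->; rewrite mulr0 mul0r.
Qed.

Lemma Ps_dom (s : seq T) (g : bf -> R) : incr g ->
  \sum_e mBS (Uset s) e * g e <=
  (\sum_f mBS (Uset s) f) * \sum_e applys nu s delta e * g e.
Proof.
move=> gi.
have hinv : forall i, i \in s -> forall e b, Bp (Uset s) (bupd e i b) = Bp (Uset s) e.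
  by move=> i iin e b; apply: Bp_upd; rewrite inE iin.
have d := applys_dom nu_pos nu_lat s (dom_start (Uset s)) gi.
rewrite (eq_bigr (fun e => mBS (Uset s) e * g e)) in d; last first.
  by move=> e _; rewrite (applys_inv nu_pos hinv).
apply: (le_trans d); rewrite mulr_sumr le_eqVlt; apply/orP; left; apply/eqP.
by apply: eq_bigr => e _; rewrite applys_scale mulrA.
Qed.

Lemma ftot_split (S : {set T}) e : Bp S e -> ftot e = #|S|%:R + fW S e.
Proof.
move=> hB; rewrite /ftot (bigID (fun x => x \in S)) /=; congr (_ + _).
rewrite -sumr_const; apply: eq_bigr => x xS.
by have := implyP (forallP hB x) xS => ->.
Qed.

Lemma Ps_ge0 (s : seq T) (g : bf -> R) : incr g -> (forall e, 0 <= g e) ->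
  0 <= \sum_e applys nu s delta e * g e.
Proof.
move=> gi g0; have := Ps_dom s gi.
have h0 : 0 <= \sum_e mBS (Uset s) e * g e by rewrite sumr_ge0 // => e _; rewrite mulr_ge0 ?mB_ge0.
move=> /(le_trans h0); rewrite pmulr_rge0 //; exact: nuB_gt0.
Qed.

Lemma sq_ratio_ge (x b : R) : 0 < b -> 1 - ind (- b <= x) <= x ^+ 2 / b ^+ 2.
Proof.
move=> b0; rewrite /ind; case: ifP => h.
  by rewrite subrr divr_ge0 ?sqr_ge0.
rewrite subr0 ler_pdivlMr ?exprn_gt0 // mul1r.
have : x < - b by rewrite ltNge h.
move=> hx; nra.
Qed.

Lemma ind_ratio_le (x a : R) : 0 < a -> ind (a <= x) <= x ^+ 2 / a ^+ 2.
Proof.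
move=> a0; rewrite /ind; case: ifP => h; last by rewrite divr_ge0 ?sqr_ge0.
rewrite ler_pdivlMr ?exprn_gt0 // mul1r; nra.
Qed.

Lemma nuA_ub (a : R) : 0 < a ->
  \sum_e nu e * ind (a <= ftot e) <= (\sum_e nu e * ftot e ^+ 2) / a ^+ 2.
Proof.
move=> a0; rewrite mulr_suml; apply: ler_sum => e _; rewrite -mulrA.
by apply: ler_wpM2l; [exact: ltW | exact: ind_ratio_le].
Qed.

Lemma pt_ind (B W A : bool) : (B -> W -> A) -> ind B * ind W <= ind B * ind A.
Proof.
by case: B; case: W; case: A => //= h; rewrite /ind ?mul1r ?mulr0 ?mul0r //; have := h isT isT.
Qed.

Lemma Ps_lb (s : seq T) (a b : R) : 0 < b -> a + b <= #|Uset s|%:R ->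
  1 - (\sum_e nu e * fW (Uset s) e ^+ 2) / b ^+ 2 <=
  \sum_e applys nu s delta e * ind (a <= ftot e).
Proof.
move=> b0 hab; set S := Uset s.
have gi := ind_ge_incr a ftot_incr.
have hd := Ps_dom s gi.
have fkg := FKG nu_pos nu_lat (fun e => ind_ge0 (Bp S e)) (fun e => ind_ge0 (- b <= fW S e))
  (Bp_incr S) (ind_ge_incr (- b) (fW_incr S)).
rewrite nu_sum mulr1 in fkg.
have e1 : \sum_e nu e * ind (Bp S e) = \sum_e mBS S e by [].
rewrite e1 in fkg.
have hpt : \sum_e nu e * (ind (Bp S e) * ind (- b <= fW S e)) <=
           \sum_e mBS S e * ind (a <= ftot e).
  apply: ler_sum => e _; rewrite /mB -mulrA; apply: ler_wpM2l; first exact: ltW.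
  apply: pt_ind => hB hW; rewrite (ftot_split hB); lra.
have pos := nuB_gt0 S.
have hA' : \sum_e nu e * ind (- b <= fW S e) <= \sum_e applys nu s delta e * ind (a <= ftot e).
  rewrite -(ler_pM2l pos); exact: le_trans fkg (le_trans hpt hd).
apply: le_trans hA'.
have h : \sum_e (nu e - nu e * ind (- b <= fW S e)) <= \sum_e nu e * fW S e ^+ 2 / b ^+ 2.
  apply: ler_sum => e _.
  rewrite -{1}(mulr1 (nu e)) -mulrBr -mulrA; apply: ler_wpM2l; first exact: ltW.
  exact: sq_ratio_ge.
move: h; rewrite sumrB nu_sum -mulr_suml.
set X := \sum_e nu e * ind _; set Y := (\sum_e _) / _; lra.
Qed.

Local Notation N := #|T|.
Definition lawG (t : nat) (e : bf) : R := ((N%:R)^-1) ^+ t * \sum_(s <- seqs T t) applys nu s delta e.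
Definition tvG (p q : bf -> R) : R := 2^-1 * \sum_e `|p e - q e|.

Lemma tv_lb (p q : bf -> R) (A : pred bf) : \sum_e p e = \sum_e q e ->
  \sum_e p e * ind (A e) - \sum_e q e * ind (A e) <= tvG p q.
Proof.
move=> hpq; rewrite /tvG.
have h : \sum_e (p e - q e) * (2 * ind (A e) - 1) <= \sum_e `|p e - q e|.
  apply: ler_sum => e _; rewrite /ind; case: (A e).
    by rewrite mulr1 mulr2n? addrK mulr1 ler_norm.
  by rewrite mulr0 add0r mulrN1 -normrN ler_norm.
have e2 : \sum_e (p e - q e) * (2 * ind (A e) - 1) =
  2 * \sum_e p e * ind (A e) - 2 * \sum_e q e * ind (A e) - (\sum_e p e - \sum_e q e).
  rewrite !mulr_sumr -!sumrB; apply: eq_bigr => e _; ring.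
rewrite e2 hpq subrr subr0 in h; move: h.
set X := \sum_e _ * ind _; set Y := \sum_e _ * ind _; set Z := \sum_e `|_|; lra.
Qed.

Lemma law_pair t (g : bf -> R) :
  \sum_e lawG t e * g e = ((N%:R)^-1) ^+ t * \sum_(s <- seqs T t) \sum_e applys nu s delta e * g e.
Proof.
rewrite /lawG; under eq_bigr do rewrite -mulrA; rewrite -mulr_sumr; congr (_ * _).
under eq_bigr do rewrite mulr_suml; rewrite exchange_big /=.
by apply: eq_bigr => s _; apply: eq_bigr => e _.
Qed.

Lemma sum_delta : \sum_e delta e = 1.
Proof.
rewrite (bigD1 top) //= /delta /ind eqxx big1 ?addr0 // => e /negbTE ->; done.
Qed.


Lemma cheb_U t (m : R) : (2 <= N)%N -> m = N%:R * ((N.-1)%:R / N%:R) ^+ t ->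
  \sum_(s <- seqs T t) (#|Uset s|%:R - m) ^+ 2 <= m * (N%:R) ^+ t.
Proof.
move=> N2 hm.
set Nr : R := N%:R.
have Nr2 : 2 <= Nr by rewrite /Nr (ler_nat R 2).
have Nr0 : Nr != 0 by rewrite gt_eqF //; lra.
set q := (N.-1)%:R / Nr.
have hN1 : (N.-1)%:R = Nr - 1 :> R.
  by rewrite /Nr -(natrB _ (ltnW N2)) subn1.
have hN2 : (N - 2)%:R = Nr - 2 :> R by rewrite /Nr natrB.
have hq : (N.-1)%:R = q * Nr :> R by rewrite /q mulfVK.
set K := Nr ^+ t.
have e : \sum_(s <- seqs T t) (#|Uset s|%:R - m) ^+ 2 =
   \sum_(s <- seqs T t) (#|Uset s|%:R : R) ^+ 2 - 2 * m * \sum_(s <- seqs T t) (#|Uset s|%:R : R)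
   + m ^+ 2 * \sum_(s <- seqs T t) (1 : R).
  rewrite !mulr_sumr -sumrB -big_split; apply: eq_bigr => s _ /=; ring.
have hm' : m = Nr * q ^+ t by rewrite hm.
have h1 : \sum_(s <- seqs T t) (#|Uset s|%:R : R) = m * K.
  by rewrite sum_U -/Nr hq exprMn hm' /K mulrA.
have hqq : Nr - 2 <= q * q * Nr.
  have -> : q * q * Nr = (Nr - 1) * (Nr - 1) / Nr by rewrite /q hN1; field.
  rewrite ler_pdivlMr; [nra | lra].
have hx : ((N - 2)%:R : R) ^+ t <= (q * q * Nr) ^+ t.
  apply: lerXn2r; rewrite ?nnegrE ?hN2; lra.
have h2 : \sum_(s <- seqs T t) (#|Uset s|%:R : R) ^+ 2 <= m * K + m ^+ 2 * K.
  have s2 := sum_U2 R T t; rewrite -/Nr in s2.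
  apply: le_trans s2 _; apply: lerD; first by rewrite -h1 sum_U.
  have -> : m ^+ 2 * K = Nr * Nr * (q * q * Nr) ^+ t by rewrite hm' /K !exprMn; ring.
  apply: ler_wpM2l; [apply: mulr_ge0; lra | exact: hx].
rewrite e size_seqs -/Nr -/K h1.
have hK : 0 <= K by rewrite exprn_ge0 //; lra.
nra.
Qed.

Theorem main_gen t (m : R) : (2 <= N)%N -> m = N%:R * ((N.-1)%:R / N%:R) ^+ t ->
  \sum_x \sum_(y | y != x) \sum_e nu e * (sp (e x) * sp (e y)) <= 1 ->
  1600 * (N%:R + 1) <= m ^+ 2 -> 400 <= m ->
  4^-1 < tvG (lawG t) nu.
Proof.
move=> N2 hm hcov hm2 hm400.
set Nr : R := N%:R.
have Nr2 : 2 <= Nr by rewrite /Nr (ler_nat R 2).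
have m0 : 0 < m by lra.
set K : R := Nr ^+ t.
have K0 : 0 < K by rewrite exprn_gt0 //; lra.
have hKinv : (Nr^-1) ^+ t * K = 1 by rewrite /K -exprMn mulVf ?expr1n // gt_eqF //; lra.
have EW : forall S : {set T}, \sum_e nu e * fW S e ^+ 2 <= Nr + 1.
  move=> S; apply: le_trans (E_total hcov); exact: (E_fsum2 (fun x => x \notin S)).
have Etot : \sum_e nu e * ftot e ^+ 2 <= Nr + 1.
  apply: le_trans (E_total hcov); exact: (E_fsum2 predT).
set a := m / 4.
have a0 : 0 < a by rewrite /a; lra.
set eps := (Nr + 1) / a ^+ 2.
have heps : eps <= 100^-1.
  rewrite /eps ler_pdivrMr; last by rewrite exprn_gt0.
  rewrite /a; nra.
have eps0 : 0 <= eps by apply: divr_ge0; [lra | exact: exprn_ge0 (ltW a0)].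
pose PA (s : seq T) := \sum_e applys nu s delta e * ind (a <= ftot e).
have hPs : forall s : seq T, (1 - eps) * ind (m / 2 <= #|Uset s|%:R) <= PA s.
  move=> s; rewrite /ind; case: ifP => hU.
    rewrite mulr1; apply: le_trans (Ps_lb (a := a) a0 _); last by rewrite /a; lra.
    rewrite lerD2l lerN2 /eps; apply: ler_wpM2r; [by rewrite invr_ge0 exprn_ge0 // ltW | exact: EW].
  rewrite mulr0; apply: Ps_ge0; [exact: (ind_ge_incr a ftot_incr) | by move=> e; exact: ind_ge0].
have hind : forall s : seq T, 1 - (#|Uset s|%:R - m) ^+ 2 / (m / 2) ^+ 2 <= ind (m / 2 <= #|Uset s|%:R).
  move=> s; rewrite /ind; case: ifP => h.
    by rewrite lerBlDr lerDl divr_ge0 ?sqr_ge0.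
  rewrite subr_le0 ler_pdivlMr; last by rewrite exprn_gt0 //; lra.
  have : #|Uset s|%:R < m / 2 :> R by rewrite ltNge h.
  move=> hlt; rewrite mul1r; nra.
have lawA : (1 - eps) * (1 - 4 / m) <= \sum_e lawG t e * ind (a <= ftot e).
  rewrite law_pair.
  apply: (le_trans (y := (Nr^-1) ^+ t * \sum_(s <- seqs T t) (1 - eps) *
            (1 - (#|Uset s|%:R - m) ^+ 2 / (m / 2) ^+ 2))); last first.
    apply: ler_wpM2l; first by rewrite exprn_ge0 // invr_ge0; lra.
    apply: ler_sum => ss _; apply: le_trans (hPs ss); apply: ler_wpM2l; [lra | exact: hind].
  rewrite -mulr_sumr sumrB -mulr_suml size_seqs -/Nr -/K.
  have hc := cheb_U N2 hm; rewrite -/Nr -/K in hc.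
  have hc' : (\sum_(s <- seqs T t) (#|Uset s|%:R - m) ^+ 2) / (m / 2) ^+ 2 <= 4 / m * K.
    rewrite ler_pdivrMr; last by rewrite exprn_gt0 //; lra.
    apply: le_trans hc _; rewrite le_eqVlt; apply/orP; left; apply/eqP; field.
    by rewrite gt_eqF.
  rewrite mulrCA; apply: ler_wpM2l; first lra.
  have -> : (1 - 4 / m) = (Nr^-1) ^+ t * (K - 4 / m * K) by rewrite mulrBr hKinv mulrCA hKinv mulr1.
  apply: ler_wpM2l; first by rewrite exprn_ge0 // invr_ge0; lra.
  by rewrite lerB.
have nuA : \sum_e nu e * ind (a <= ftot e) <= eps.
  apply: le_trans (nuA_ub a0) _; rewrite /eps; apply: ler_wpM2r; last exact: Etot.
  by rewrite invr_ge0 exprn_ge0 // ltW.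
have mass : \sum_e lawG t e = \sum_e nu e.
  rewrite nu_sum; transitivity (\sum_e lawG t e * 1); first by apply: eq_bigr => e _; rewrite mulr1.
  have hm1 : forall s : seq T, \sum_e applys nu s delta e * 1 = 1.
    move=> s; under eq_bigr do rewrite mulr1.
    by rewrite (applys_mass nu_pos) sum_delta.
  rewrite law_pair (eq_bigr (fun _ => 1)); last by move=> s _; exact: hm1.
  by rewrite size_seqs -/Nr -/K hKinv.
have tv := tv_lb (fun e => a <= ftot e) mass.
have h4 : 4 / m <= 100^-1 by rewrite ler_pdivrMr // -ler_pdivrMl //; lra.
apply: lt_le_trans tv.
set L := \sum_e lawG t e * _ in lawA *; set V := \sum_e nu e * _ in nuA *.
have : (99/100) * (99/100) <= (1 - eps) * (1 - 4 / m).
  apply: ler_pM; lra.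
lra.
Qed.
End Prob.

Section Ising1.
Variable R : realType.
Variable n : nat.
Variables (adj : rel 'I_n) (J : 'I_n -> 'I_n -> R).
Hypothesis HJ : forall u v, 0 <= J u v.
Variable F : {set 'I_n}.

Local Notation w := (ising_weight adj J).
Local Notation Z := (ising_Z adj J).
Local Notation mu := (ising_mu adj J).
Local Notation nu := (@nuF R n adj J F).
Local Notation Fs := (Fsite F).
Local Notation Fc := (Fconfig F).

Lemma w_gt0 s : 0 < w s.
Proof. exact: expR_gt0. Qed.

Lemma Z_gt0 : 0 < Z.
Proof.
rewrite /ising_Z (bigD1 [ffun=> false]) //=.
by apply: ltr_wpDr; [rewrite sumr_ge0 // => s _; exact: ltW (w_gt0 s) | exact: w_gt0].
Qed.

Lemma mu_gt0 s : 0 < mu s.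
Proof. by rewrite /ising_mu divr_gt0 ?w_gt0 ?Z_gt0. Qed.

Lemma sum_mu : \sum_s mu s = 1.
Proof.
by rewrite /ising_mu -mulr_suml -/(ising_Z adj J) mulfV // gt_eqF // Z_gt0.
Qed.

Lemma spin_supermod (a b c d : bool) :
  spin R a * spin R b + spin R c * spin R d <=
  spin R (a || c) * spin R (b || d) + spin R (a && c) * spin R (b && d).
Proof. by case: a; case: b; case: c; case: d; rewrite /spin /=; lra. Qed.

Lemma w_supermod (x y : config n) :
  w x * w y <= w (bjoin x y) * w (bmeet x y).
Proof.
rewrite /ising_weight -!expRD ler_expR -!big_split /=.
apply: ler_sum => u _; rewrite -!big_split /=; apply: ler_sum => v _.
rewrite !ffunE -!mulrA -!mulrDr; apply: ler_wpM2l => //.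
exact: spin_supermod.
Qed.

Lemma mu_supermod (x y : config n) :
  mu x * mu y <= mu (bjoin x y) * mu (bmeet x y).
Proof.
rewrite /ising_mu mulrACA [X in _ <= X]mulrACA ler_wpM2r ?w_supermod //.
by rewrite mulr_ge0 // invr_ge0 ltW // Z_gt0.
Qed.

Lemma restrF_join (s s' : config n) : restrF F (bjoin s s') = bjoin (restrF F s) (restrF F s').
Proof. by apply/ffunP=> y; rewrite !ffunE. Qed.
Lemma restrF_meet (s s' : config n) : restrF F (bmeet s s') = bmeet (restrF F s) (restrF F s').
Proof. by apply/ffunP=> y; rewrite !ffunE. Qed.

Lemma nu_supermod (x y : Fc) : nu x * nu y <= nu (bjoin x y) * nu (bmeet x y).
Proof.
rewrite /nuF !(big_mkcond (fun s => restrF F s == _)) /=.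
apply: (AD (a := fun s => if restrF F s == x then mu s else 0)
           (b := fun s => if restrF F s == y then mu s else 0)
           (c := fun s => if restrF F s == bjoin x y then mu s else 0)
           (d := fun s => if restrF F s == bmeet x y then mu s else 0)).
- by move=> s; case: ifP => // _; exact: ltW (mu_gt0 s).
- by move=> s; case: ifP => // _; exact: ltW (mu_gt0 s).
- by move=> s; case: ifP => // _; exact: ltW (mu_gt0 s).
- by move=> s; case: ifP => // _; exact: ltW (mu_gt0 s).
move=> s s'; case: eqP => [ex|_]; last by rewrite mul0r mulr_ge0 //; case: ifP => // _; exact: ltW (mu_gt0 _).
case: eqP => [ey|_]; last by rewrite mulr0 mulr_ge0 //; case: ifP => // _; exact: ltW (mu_gt0 _).
by rewrite restrF_join restrF_meet ex ey !eqxx mu_supermod.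
Qed.

Definition extF (eta : Fc) : config n :=
  [ffun i => if insub i is Some y then eta y else false].

Lemma restrF_ext eta : restrF F (extF eta) = eta.
Proof. by apply/ffunP=> y; rewrite !ffunE valK. Qed.

Lemma nu_gt0 eta : 0 < nu eta.
Proof.
rewrite /nuF (bigD1 (extF eta)) ?restrF_ext ?eqxx //=.
by apply: ltr_wpDr; [rewrite sumr_ge0 // => s _; exact: ltW (mu_gt0 s) | exact: mu_gt0].
Qed.

Lemma sum_E (G : Fc -> R) : \sum_s mu s * G (restrF F s) = \sum_eta nu eta * G eta.
Proof.
rewrite /nuF; under [RHS]eq_bigr do rewrite mulr_suml.
rewrite (exchange_big_dep xpredT) //=; apply: eq_bigr => s _.
by rewrite (big_pred1 (restrF F s)) // => eta /=; rewrite eq_sym.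
Qed.

Lemma sum_nu : \sum_eta nu eta = 1.
Proof.
transitivity (\sum_eta nu eta * 1); first by apply: eq_bigr => eta _; rewrite mulr1.
rewrite -(sum_E (fun _ => 1)) /= -[RHS]sum_mu; by apply: eq_bigr => s _; rewrite mulr1.
Qed.

Definition negc (s : config n) : config n := [ffun i => ~~ s i].
Definition negF (eta : Fc) : Fc := [ffun i => ~~ eta i].

Lemma negcK : involutive negc.
Proof. by move=> s; apply/ffunP=> i; rewrite !ffunE negbK. Qed.

Lemma w_neg s : w (negc s) = w s.
Proof.
rewrite /ising_weight; congr expR; apply: eq_bigr => u _; apply: eq_bigr => v _.
by rewrite !ffunE; case: (s u); case: (s v); rewrite /spin /=; ring.
Qed.

Lemma mu_neg s : mu (negc s) = mu s.
Proof. by rewrite /ising_mu w_neg. Qed.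

Lemma nu_neg eta : nu (negF eta) = nu eta.
Proof.
rewrite /nuF (reindex_inj (inv_inj negcK)) /=; apply: eq_big => s.
  apply/eqP/eqP => [e|<-]; last by apply/ffunP=> y; rewrite !ffunE.
  by apply/ffunP=> y; have := congr1 (fun f : Fc => f y) e; rewrite !ffunE => /negb_inj.
by rewrite mu_neg.
Qed.
End Ising1.

Section Numeric.
Variable R : realType.

Lemma expR39 : (300 * 300 : R) <= expR 39.
Proof.
have := @expR_ge1Dxn R 39 3 ltac:(lra).
have -> : (3.+1)`!%:R = 24 :> R by [].
rewrite !exprS expr0 mulr1; lra.
Qed.

Lemma numeric (N t : nat) :
  (t%:R : R) < 2^-1 * N%:R * ln (N%:R : R) - 20 * N%:R ->
  (2 <= N)%N /\
  (1600 * (N%:R + 1) <= (N%:R * ((N.-1)%:R / N%:R) ^+ t) ^+ 2 :> R) /\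
  (400 <= N%:R * ((N.-1)%:R / N%:R) ^+ t :> R).
Proof.
move=> h.
set Nr : R := N%:R; set L := ln Nr.
have t0 : 0 <= (t%:R : R) by [].
have hNL : 0 < Nr * (L - 40) by move: h; rewrite -/Nr -/L; nra.
have N0 : (0 < N)%N.
  by rewrite lt0n; apply/eqP => N0; move: hNL; rewrite /Nr N0 mul0r ltxx.
have Nr0 : 0 < Nr by rewrite /Nr ltr0n.
have L40 : 40 < L by rewrite (pmulr_rgt0 _ Nr0) in hNL; lra.
have N1 : N != 1%N.
  by apply/eqP => N1; move: L40; rewrite /L /Nr N1 ln1; lra.
have N2 : (2 <= N)%N by rewrite ltn_neqAle eq_sym N1 N0.
split => //.
have Nr2 : 2 <= Nr by rewrite /Nr (ler_nat R 2).
have LN : L <= Nr - 1.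
  by have := @le_ln1Dx R (Nr - 1) ltac:(lra); rewrite addrCA subrr addr0.
have hN1 : (N.-1)%:R = Nr - 1 :> R by rewrite /Nr -(natrB _ (ltnW N2)) subn1.
set q := (N.-1)%:R / Nr.
have q0 : 0 < q by rewrite /q hN1 divr_gt0 //; lra.
have lnq : - (Nr - 1)^-1 <= ln q.
  have -> : q = ((Nr - 1)^-1 + 1)^-1.
    rewrite /q hN1; field; rewrite -/Nr; apply/andP; split; rewrite gt_eqF //; lra.
  have hi : 0 < (Nr - 1)^-1 by rewrite invr_gt0; lra.
  rewrite lnV; last by rewrite posrE; lra.
  rewrite lerN2 addrC; apply: le_ln1Dx; lra.
have hqt : expR (- (t%:R / (Nr - 1))) <= q ^+ t.
  rewrite -[q ^+ t]lnK ?posrE ?exprn_gt0 // lnXn // -[ln q *+ t]mulr_natl ler_expR.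
  rewrite -mulrN.
  by apply: ler_wpM2l.

have hexp : expR (39 - L) <= expR (- (t%:R / (Nr - 1))) ^+ 2.
  rewrite -expRM_natl ler_expR.
  rewrite mulrN mulrA -[2%:R * _ / _]mulrA; rewrite lerNr opprB.
  rewrite mulrA ler_pdivrMr; last lra.
  move: h; rewrite -/Nr -/L => h.
  have e1 : (L - 39) * (Nr - 1) = Nr * L - L - 39 * Nr + 39 by ring.
  have e2 : 2^-1 * Nr * L = 2^-1 * (Nr * L) by ring.
  rewrite e1; rewrite e2 in h; lra.
have he : expR (39 - L) = expR 39 / Nr.
  by rewrite expRB /L lnK // posrE.
set m := Nr * q ^+ t.
have m2 : Nr * expR 39 <= m ^+ 2.
  have : Nr ^+ 2 * expR (39 - L) <= m ^+ 2.
    rewrite /m exprMn; apply: ler_wpM2l; first by rewrite exprn_ge0 // ltW.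
    apply: le_trans hexp _; apply: lerXn2r; rewrite ?nnegrE ?expR_ge0 //.
      by rewrite exprn_ge0 // ltW.
  rewrite he; apply: le_trans; rewrite le_eqVlt; apply/orP; left; apply/eqP.
  by field; rewrite gt_eqF.
have e39 := expR39.
have m0 : 0 <= m by rewrite /m mulr_ge0 ?exprn_ge0 ?ltW.
split; first nra.
have : 400 * 400 <= m ^+ 2 by nra.
nra.
Qed.
End Numeric.

Section Final.
Variable R : realType.
Variable n : nat.
Variables (adj : rel 'I_n) (J : 'I_n -> 'I_n -> R).
Hypothesis HJ : forall u v, 0 <= J u v.
Variable F : {set 'I_n}.
Local Notation T := (Fsite F).
Local Notation nu := (@nuF R n adj J F).

Lemma cardT : #|{: T}| = #|F|.
Proof. by rewrite card_sig; apply: eq_card => x; rewrite inE. Qed.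

Lemma setF_bupd (e : Fconfig F) (x : T) b : setF e (val x) b = bupd e x b.
Proof. by apply/ffunP=> y; rewrite !ffunE (inj_eq val_inj). Qed.

Lemma Kmat_eq (e e' : Fconfig F) :
  Kmat adj J e e' = (#|{: T}|%:R)^-1 * \sum_(x : T) Kv nu x e e'.
Proof.
rewrite /Kmat cardT; congr (_ * _).
rewrite (big_sub F (fun v => \sum_(b : bool) (if e' == setF e v b then
        nuF adj J (setF e v b) / (nuF adj J (setF e v true) + nuF adj J (setF e v false)) else 0))).
apply: eq_bigr => x _; apply: eq_bigr => b _.
by rewrite !setF_bupd.
Qed.

Lemma lawZ_eq t (e : Fconfig F) : lawZ adj J F t e = lawG nu t e.
Proof.
elim: t e => [|t IH] e.
  by rewrite /lawG /= ffunE expr0 mul1r big_seq1.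
rewrite /= ffunE /lawG sum_seqsS.
under eq_bigr do rewrite IH Kmat_eq /lawG.
have -> : \sum_(s <- seqs T t) \sum_x applys nu (rcons s x) (delta R (T:=T)) e =
   \sum_(s <- seqs T t) \sum_x \sum_f applys nu s (delta R (T:=T)) f * Kv nu x f e.
  by apply: eq_bigr => s _; apply: eq_bigr => x _; rewrite applys_rcons.
set c := (#|{: T}|%:R : R)^-1.
rewrite exprS.
under eq_bigr do rewrite [_ * (c * _)]mulrCA -!mulrA.
rewrite -mulr_sumr -mulrA; congr (_ * _); rewrite -mulr_sumr; congr (_ * _).
under eq_bigr do rewrite mulr_suml.
rewrite exchange_big /=; apply: eq_bigr => s _.
under eq_bigr do rewrite mulr_sumr.
by rewrite exchange_big.
Qed.

Lemma cov_conv (x y : T) :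
  ising_cov adj J (val x) (val y) = \sum_e nu e * (sp R (e x) * sp R (e y)).
Proof.
have h1 : forall G : Fconfig F -> R,
    ising_E adj J (fun s => G (restrF F s)) = \sum_e nu e * G e.
  by move=> G; rewrite /ising_E sum_E.
have hx : ising_E adj J (fun s => spin R (s (val x))) = 0.
  rewrite -(E_sp0 (@nu_neg R n adj J F) x) -h1; apply: eq_bigr => s _; by rewrite ffunE.
rewrite /ising_cov hx mul0r subr0 -h1; apply: eq_bigr => s _; by rewrite !ffunE.
Qed.

Lemma cov_sum_conv :
  \sum_(u in F) \sum_(v in F | v != u) ising_cov adj J u v =
  \sum_(x : T) \sum_(y : T | y != x) \sum_e nu e * (sp R (e x) * sp R (e y)).
Proof.
rewrite (big_sub F (fun u => \sum_(v in F | v != u) ising_cov adj J u v)).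
apply: eq_bigr => x _.
rewrite (big_sub_cond F (fun v => v != val x) (fun v => ising_cov adj J (val x) v)).
apply: eq_big => [y|y _]; first by rewrite (inj_eq val_inj).
exact: cov_conv.
Qed.
End Final.

Lemma ln_n_ge2 (R : realType) (n : nat) : (16 <= n)%N -> 2 <= ln (n%:R : R).
Proof.
move=> hn.
set E := expR (2^-1 : R).
have E0 : 0 < E by exact: expR_gt0.
have h1 : E <= 2.
  have := @expR_ge1Dx R (- 2^-1); rewrite expRN -/E => h.
  have hE : E * E^-1 = 1 by rewrite mulfV // gt_eqF.
  set Ei := E^-1 in h hE; nra.
have h2 : expR (2 : R) <= 16.
  have -> : (2 : R) = 4%:R * 2^-1 by field.
  rewrite expRM_natl -/E.
  apply: (le_trans (y := 2 ^+ 4)); last by rewrite !exprS expr0; lra.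
  by apply: lerXn2r; rewrite ?nnegrE //; lra.
have hn' : (16 : R) <= n%:R by rewrite (ler_nat R 16).
apply: (le_trans (y := ln (expR 2))); first by rewrite expRK.
rewrite ler_ln ?posrE ?expR_gt0 //; try lra.
Qed.

Theorem lemma2p11 :
  exists n0 : nat, forall (R : realType) (n : nat), (n0 <= n)%N ->
  forall (adj : rel 'I_n) (J : 'I_n -> 'I_n -> R) (F : {set 'I_n}),
    symmetric adj -> irreflexive adj ->
    (forall u v, 0 <= J u v) ->
    (forall u v, J u v = J v u) ->
    (#|F|%:Z = Num.floor (Num.sqrt (n%:R : R) / ln (n%:R : R))) ->
    \sum_(u in F) \sum_(v in F | v != u) ising_cov adj J u v <= 2 / ln (n%:R : R) ->
    forall t : nat, mixed_by adj J F t ->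
      2^-1 * #|F|%:R * ln (#|F|%:R : R) - 20 * #|F|%:R <= (t%:R : R).
Proof.
exists 16%N => R n Hn adj J F _ _ HJ _ _ Hcov t Hmix.
rewrite leNgt; apply/negP => Hlt.
have [N2 [Hm2 Hm400]] := numeric Hlt.
have hln := ln_n_ge2 R Hn.
have hcov1 : \sum_(x : Fsite F) \sum_(y : Fsite F | y != x)
    \sum_e nuF adj J e * (sp R (e x) * sp R (e y)) <= 1.
  rewrite -cov_sum_conv; apply: le_trans Hcov _.
  rewrite ler_pdivrMr; last lra.
  lra.
rewrite -(cardT F) in N2 Hm2 Hm400.
have := main_gen (@nu_gt0 R n adj J F) (@nu_supermod R n adj J HJ F) (sum_nu adj J F) (@nu_neg R n adj J F)
   N2 (erefl _) hcov1 Hm2 Hm400.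
have -> : tvG (lawG (@nuF R n adj J F) t) (@nuF R n adj J F) = tv_dist (lawZ adj J F t) (@nuF R n adj J F).
  rewrite /tvG /tv_dist; congr (_ * _); apply: eq_bigr => e _; by rewrite lawZ_eq.
by rewrite ltNge Hmix.
Qed.
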